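(* Let $\{M_p\mid p\in P\}$ be a Morse decomposition of a multivector field on a finite simplicial complex $K$, let $f:K\to\mathbb R$ be Lyapunov for the Morse decomposition, and let $P_f$ and $P'_f$ be two $f$-compatible orders of $P$, with corresponding persistence modules $H(\mathbf F,P_f)$ and $H(\mathbf F',P'_f)$. Then $\mathrm{pers}(H(\mathbf F,P_f))=\mathrm{pers}(H(\mathbf F',P'_f))$.
   Context: $K$ is a finite simplicial complex; a multivector field $\mathcal V$ on $K$ is a partition of $K$ into convex sets $V$ (if $\sigma,\tau\in V$ and $\sigma\le\mu\le\tau$ in the face order then $\mu\in V$); $F_{\mathcal V}(\sigma)=[\sigma]_{\mathcal V}\cup\{\tau:\tau\le\sigma\}$ where $[\sigma]_{\mathcal V}$ is the part containing $\sigma$; a path is a sequence $\sigma_1,\dots,\sigma_r$ with $\sigma_k\in F_{\mathcal V}(\sigma_{k-1})$. A Morse decomposition indexed by a finite poset $(P,\le_P)$ is a partition $K=\bigsqcup_{p\in P}M_p$ such that every path from $M_p$ to $M_q$ has $q\le_P p$. Let $m=|P|$. $f:K\to\mathbb R$ is Lyapunov if $f$ is constant on each $M_p$, with value $f(p)$, and $p\le_P q\Rightarrow f(p)\le f(q)$. An $f$-compatible order $P_f$ is an enumeration $p_1,\dots,p_m$ of $P$ that is a linear extension of $\le_P$ with $f(p_1)\le\dots\le f(p_m)$. For such an order, $K_i=\bigsqcup_{j\le i}M_{p_j}$ is a subcomplex of $K$ and $H(\mathbf F,P_f)$ is the persistence module $H_*(C(K_1))\to\dots\to H_*(C(K_m))$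 of simplicial homology over $\mathbb Z_2$ with inclusion-induced maps; $\mathbf F'$ is the same construction for $P'_f$. For such a module indexed by $p_1,\dots,p_m$, $\mathrm{pers}$ is the persistence diagram: decompose each homological degree into interval modules $[a,b]$, $1\le a\le b\le m$, and record for each the point $(f(p_a),f(p_{b+1}))$ with $f(p_{m+1}):=+\infty$, discarding points with $f(p_a)=f(p_{b+1})$; the result is a multiset of points per degree. *)

(* Defs.v *)
From HB Require Import structures.
From mathcomp Require Import all_boot all_order all_algebra.
From mathcomp Require Import reals.
Set Implicit Arguments. Unset Strict Implicit. Unset Printing Implicit Defensive.
Import Order.TTheory GRing.Theory Num.Theory.

Local Open Scope ring_scope.

Section Complexes.
Variable V : finType.

Definition simplicial_complex (K : {set {set V}}) : Prop :=
  set0 \notin K /\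
  forall s t : {set V}, s \in K -> t \subset s -> t != set0 -> t \in K.

Definition multivector_field (K : {set {set V}}) (MV : {set {set {set V}}}) : Prop :=
  partition MV K /\
  forall B, B \in MV -> forall s t m : {set V},
    s \in B -> t \in B -> m \in K -> s \subset m -> m \subset t -> m \in B.

Definition Fv (K : {set {set V}}) (MV : {set {set {set V}}}) (s : {set V})
  : {set {set V}} :=
  pblock MV s :|: [set t in K | t \subset s].

Definition mv_path (K : {set {set V}}) (MV : {set {set {set V}}})
  (s : seq {set V}) : Prop :=
  s <> [::] /\ all (fun x => x \in K) s /\
  path (fun a b => b \in Fv K MV a) (head set0 s) (behead s).

Definition morse_decomposition (K : {set {set V}}) (MV : {set {set {set V}}})
  (d : Order.disp_t) (P : finPOrderType d) (M : P -> {set {set V}}) : Prop :=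
  (\bigcup_(p : P) M p = K) /\
  (forall p q : P, p != q -> [disjoint M p & M q]) /\
  (forall (p q : P) (s : seq {set V}), mv_path K MV s ->
     head set0 s \in M p -> last set0 s \in M q -> (q <= p)%O).

Definition lyapunov (R : realType) (d : Order.disp_t) (P : finPOrderType d)
  (M : P -> {set {set V}}) (f : {set V} -> R) (fP : P -> R) : Prop :=
  (forall p s, s \in M p -> f s = fP p) /\
  (forall p q : P, (p <= q)%O -> fP p <= fP q).

(* f-compatible order: enumeration ord 0, ..., ord (m-1) of P (0-based:
   ord i is p_{i+1} of the paper) which is a linear extension of <=_P and
   along which fP is nondecreasing. *)
Definition f_compatible (R : realType) (d : Order.disp_t) (P : finPOrderType d)
  (fP : P -> R) (ord : 'I_#|P| -> P) : Prop :=
  bijective ord /\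
  (forall i j : 'I_#|P|, (ord i <= ord j)%O -> (i <= j)%N) /\
  (forall i j : 'I_#|P|, (i <= j)%N -> fP (ord i) <= fP (ord j)).

(* K_{i+1} = union of M_{ord j}, j <= i  (0-based index i) *)
Definition Kfilt (d : Order.disp_t) (P : finPOrderType d)
  (M : P -> {set {set V}}) (ord : 'I_#|P| -> P) (i : nat) : {set {set V}} :=
  \bigcup_(j : 'I_#|P| | (j <= i)%N) M (ord j).

Definition chain := {ffun {set V} -> 'F_2}.

Definition is_nchain (n : nat) (L : {set {set V}}) (c : chain) : Prop :=
  forall s, c s != 0 -> s \in L /\ #|s| = n.+1.

(* boundary operator over Z_2 (zero in degree 0) *)
Definition bd (c : chain) : chain :=
  [ffun t : {set V} => if t == set0 then 0
     else \sum_(s : {set V} | (t \subset s) && (#|s| == #|t|.+1)) c s].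

Definition is_cycle (n : nat) (L : {set {set V}}) (c : chain) : Prop :=
  is_nchain n L c /\ bd c = 0.

Definition is_boundary (n : nat) (L : {set {set V}}) (c : chain) : Prop :=
  exists c', is_nchain n.+1 L c' /\ bd c' = c.

End Complexes.

(* Bars are pairs (a, b) of 0-based indices with a <= b < m, i.e. the interval
   [a+1, b+1] of the paper.  Bar k is alive at (0-based) index i iff a <= i <= b. *)
Definition alive (bars : seq (nat * nat)) (k i : nat) : bool :=
  ((nth (0, 0) bars k).1 <= i <= (nth (0, 0) bars k).2)%N.

(* An interval decomposition of the degree-n persistence module
   H_n(K_1) -> ... -> H_n(K_m) (Z_2 coefficients, inclusion-induced maps),
   given explicitly as an isomorphism from the direct sum of the interval
   modules of the bars: z k i is a cycle representing the image in H_n(K_{i+1})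
   of the generator of the k-th interval summand at index i.  The conditions say:
   - the representatives are cycles of K_{i+1};
   - the structure map sends the class of z k i to the class of z k (i+1) while
     the bar is alive, and to 0 when the bar dies;
   - for each i, the classes of the z k i (k alive at i) form a basis of
     H_n(K_{i+1}) (linearly independent modulo boundaries, and spanning). *)
Definition interval_decomposition (V : finType) (K : {set {set V}})
  (d : Order.disp_t) (P : finPOrderType d) (M : P -> {set {set V}})
  (ord : 'I_#|P| -> P) (n : nat) (bars : seq (nat * nat))
  (z : nat -> nat -> chain V) : Prop :=
  let L := Kfilt M ord in
  (forall k, (k < size bars)%N ->
     ((nth (0, 0) bars k).1 <= (nth (0, 0) bars k).2 < #|P|)%N) /\
  (forall k i, (k < size bars)%N -> alive bars k i -> is_cycle n (L i) (z k i)) /\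
  (forall k i, (k < size bars)%N -> alive bars k i -> alive bars k i.+1 ->
     is_boundary n (L i.+1) (z k i - z k i.+1)) /\
  (forall k i, (k < size bars)%N -> alive bars k i -> ~~ alive bars k i.+1 ->
     (i.+1 < #|P|)%N -> is_boundary n (L i.+1) (z k i)) /\
  (forall i, (i < #|P|)%N -> forall S : {set 'I_(size bars)},
     (forall k, k \in S -> alive bars k i) ->
     is_boundary n (L i) (\sum_(k in S) z k i) -> S = set0) /\
  (forall i, (i < #|P|)%N -> forall c, is_cycle n (L i) c ->
     exists S : {set 'I_(size bars)},
       (forall k, k \in S -> alive bars k i) /\
       is_boundary n (L i) (c - \sum_(k in S) z k i)).

(* value f(p_{i+1}) for 0-based i; None stands for +infinity (i = m) *)
Definition fval (R : realType) (d : Order.disp_t) (P : finPOrderType d)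
  (fP : P -> R) (ord : 'I_#|P| -> P) (i : nat) : option R :=
  match insub i : option 'I_#|P| with
  | Some j => Some (fP (ord j))
  | None => None
  end.

(* persistence diagram (as a multiset = seq up to permutation) of a barcode:
   bar [a,b] gives the point (f(p_a), f(p_{b+1})) (paper's 1-based indices),
   points on the diagonal are discarded. *)
Definition pers (R : realType) (d : Order.disp_t) (P : finPOrderType d)
  (fP : P -> R) (ord : 'I_#|P| -> P) (bars : seq (nat * nat))
  : seq (option R * option R) :=
  [seq x <- [seq (fval fP ord ab.1, fval fP ord ab.2.+1) | ab <- bars]
     | x.1 != x.2].

(* Main.v *)
Require Import Defs.
From HB Require Import structures.
From mathcomp Require Import all_boot all_order all_algebra.
From mathcomp Require Import reals.
From Stdlib Require Import ClassicalEpsilon.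
From mathcomp Require Import zify.
Set Implicit Arguments. Unset Strict Implicit. Unset Printing Implicit Defensive.
Import Order.TTheory GRing.Theory Num.Theory.

Section Chains.
Variable V : finType.
Local Open Scope ring_scope.
Implicit Types (c : chain V) (L : {set {set V}}).

Lemma F2N (a : 'F_2) : - a = a.
Proof. by case: a => [[|[|?]] ?]; apply: val_inj. Qed.

Lemma chainN c : - c = c.
Proof. by apply/ffunP => s; rewrite !ffunE F2N. Qed.

Lemma bdD c1 c2 : bd (c1 + c2) = bd c1 + bd c2.
Proof.
apply/ffunP => t; rewrite !ffunE; case: ifP => _; first by rewrite addr0.
by rewrite -big_split /=; apply: eq_bigr => s _; rewrite ffunE.
Qed.

Lemma bd0 : bd (0 : chain V) = 0.
Proof.
apply/ffunP => t; rewrite !ffunE; case: ifP => // _.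
by apply: big1 => s _; rewrite ffunE.
Qed.

Lemma nchain0 k L : is_nchain k L 0.
Proof. by move=> s; rewrite ffunE eqxx. Qed.

Lemma nchainD k L c1 c2 : is_nchain k L c1 -> is_nchain k L c2 ->
  is_nchain k L (c1 + c2).
Proof.
move=> h1 h2 s; rewrite ffunE.
case: (eqVneq (c1 s) 0) => [->|/h1 //]; rewrite add0r; exact: h2.
Qed.

Lemma nchain_mono k L1 L2 c : L1 \subset L2 -> is_nchain k L1 c -> is_nchain k L2 c.
Proof. by move=> /subsetP sL h s /h [/sL ? ?]. Qed.

Lemma bnd0 k L : is_boundary k L 0.
Proof. by exists 0; split; [apply: nchain0|apply: bd0]. Qed.

Lemma bndD k L c1 c2 : is_boundary k L c1 -> is_boundary k L c2 ->
  is_boundary k L (c1 + c2).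
Proof.
move=> [e1 [h1 <-]] [e2 [h2 <-]]; exists (e1 + e2); split; last exact: bdD.
exact: nchainD.
Qed.

Lemma bndN k L c : is_boundary k L c -> is_boundary k L (- c).
Proof. by rewrite chainN. Qed.

Lemma bndB k L c1 c2 : is_boundary k L c1 -> is_boundary k L c2 ->
  is_boundary k L (c1 - c2).
Proof. by move=> h1 h2; apply: bndD => //; apply: bndN. Qed.

Lemma bnd_mono k L1 L2 c : L1 \subset L2 -> is_boundary k L1 c -> is_boundary k L2 c.
Proof. by move=> sL [e [h <-]]; exists e; split => //; apply: nchain_mono h. Qed.

Lemma bnd_sum k L (I : finType) (S : {set I}) (F : I -> chain V) :
  (forall i, i \in S -> is_boundary k L (F i)) -> is_boundary k L (\sum_(i in S) F i).
Proof.
move=> h; apply: (big_ind (is_boundary k L)) => //; [exact: bnd0|exact: bndD].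
Qed.

Lemma cycD k L c1 c2 : is_cycle k L c1 -> is_cycle k L c2 -> is_cycle k L (c1 + c2).
Proof. by move=> [h1 e1] [h2 e2]; split; [apply: nchainD|rewrite bdD e1 e2 addr0]. Qed.

Lemma cyc_sum k L (I : finType) (S : {set I}) (F : I -> chain V) :
  (forall i, i \in S -> is_cycle k L (F i)) -> is_cycle k L (\sum_(i in S) F i).
Proof.
move=> h; apply: (big_ind (is_cycle k L)) => //; last exact: cycD.
by split; [apply: nchain0|apply: bd0].
Qed.

Lemma sum_symdiff (I : finType) (S1 S2 : {set I}) (F : I -> chain V) :
  \sum_(i in S1) F i - \sum_(i in S2) F i =
  \sum_(i in (S1 :\: S2) :|: (S2 :\: S1)) F i.
Proof.
rewrite [X in X - _](big_setID S2) [X in _ - X](big_setID S1) /= chainN.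
rewrite [in RHS](big_setID (S1 :\: S2)) /=.
have -> : (S1 :\: S2 :|: S2 :\: S1) :&: (S1 :\: S2) = S1 :\: S2.
  by apply/setP => x; rewrite !inE; case: (x \in S1); case: (x \in S2).
have -> : (S1 :\: S2 :|: S2 :\: S1) :\: (S1 :\: S2) = S2 :\: S1.
  by apply/setP => x; rewrite !inE; case: (x \in S1); case: (x \in S2).
rewrite setIC.
set A := \sum_(i in _ :&: _) F i.
set B := \sum_(i in S1 :\: S2) F i.
set C := \sum_(i in S2 :\: S1) F i.
have e : A + A = 0 by rewrite -{2}[A](chainN A) subrr.
by rewrite [A + B]addrC [A + C]addrC addrACA e addr0.
Qed.
End Chains.

Lemma count_card (T : Type) (x0 : T) (p : pred T) (s : seq T) :
  count p s = #|[set k : 'I_(size s) | p (nth x0 s k)]|.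
Proof.
rewrite cardsE -sum1_card.
rewrite (eq_bigl (fun k : 'I_(size s) => p (nth x0 s k))) //.
rewrite -(big_mkord (fun k => p (nth x0 s k)) (fun _ => 1)) /index_iota subn0.
by rewrite sum1_count -{1}(mkseq_nth x0 s) /mkseq count_map.
Qed.

Lemma card_lt m j (h : j <= m) : #|[set i : 'I_m | i < j]| = j.
Proof.
have -> : [set i : 'I_m | i < j] = widen_ord h @: setT.
  apply/setP => i; rewrite inE; apply/idP/imsetP => [lt|[k _ ->]] //=.
  by exists (Ordinal lt) => //; apply: val_inj.
by rewrite card_imset ?cardsT ?card_ord //; by move=> x y /(congr1 val) /= /val_inj.
Qed.

Definition Q (s : seq (nat * nat)) (a b : nat) :=
  count (fun ab : nat * nat => (ab.1 < a) && (b <= ab.2)) s.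

Lemma region (s : seq (nat * nat)) a1 a2 b1 b2 : a1 <= a2 -> b1 <= b2 ->
  count (fun ab : nat * nat => (a1 <= ab.1 < a2) && (b1 <= ab.2 < b2)) s
  + Q s a1 b1 + Q s a2 b2 = Q s a2 b1 + Q s a1 b2.
Proof.
rewrite /Q => h1 h2; elim: s => //= [[a b] s IH] /=; move: IH.
case: (ltnP a a1); case: (ltnP a a2); case: (leqP b1 b); case: (leqP b2 b);
  move=> /= *; lia.
Qed.

Lemma Kfilt_mono (V : finType) d (P : finPOrderType d) (M : P -> {set {set V}})
  ord i j : i <= j -> Kfilt M ord i \subset Kfilt M ord j.
Proof.
move=> ij; apply/subsetP => s /bigcupP [k hk hs]; apply/bigcupP; exists k => //.
exact: leq_trans ij.
Qed.

Lemma zmod_id (G : zmodType) (x a r b : G) : (x - b = (x - (a + r)) + r + (a - b))%R.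
Proof. by rewrite opprD !addrA !subrK. Qed.

Section Decomp.
Variables (V : finType) (K : {set {set V}}) (d : Order.disp_t) (P : finPOrderType d).
Variables (M : P -> {set {set V}}) (ord : 'I_#|P| -> P) (n : nat).
Variables (bars : seq (nat * nat)) (z : nat -> nat -> chain V).
Hypothesis D : interval_decomposition K M ord n bars z.
Local Notation L := (Kfilt M ord).
Local Notation m := #|P|.
Local Notation a k := (nth (0, 0) bars k).1.
Local Notation b k := (nth (0, 0) bars k).2.
Local Open Scope ring_scope.

Let Hb := D.1.
Let Hc := D.2.1.
Let Ht := D.2.2.1.
Let Hd := D.2.2.2.1.
Let Hi : forall i, (i < m)%N -> forall S : {set 'I_(size bars)},
     (forall k, k \in S -> alive bars k i) ->
     is_boundary n (L i) (\sum_(k in S) z k i) -> S = set0 := D.2.2.2.2.1.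
Let Hs : forall i, (i < m)%N -> forall c, is_cycle n (L i) c ->
     exists S : {set 'I_(size bars)},
       (forall k, k \in S -> alive bars k i) /\
       is_boundary n (L i) (c - \sum_(k in S) z k i) := D.2.2.2.2.2.

Lemma transport k al be : (k < size bars)%N -> (a k <= al)%N -> (al <= be)%N ->
  (be <= b k)%N -> is_boundary n (L be) (z k al - z k be).
Proof.
move=> hk h1; elim: be => [|be IH] h2 h3.
  by rewrite leqn0 in h2; rewrite (eqP h2) subrr; apply: bnd0.
case: (ltngtP al be.+1) h2 => // [lt _|<- _]; last by rewrite subrr; apply: bnd0.
have -> : z k al - z k be.+1 = (z k al - z k be) + (z k be - z k be.+1).
  by rewrite addrA subrK.
apply: bndD.
  by apply: bnd_mono (Kfilt_mono _ _ (leqnSn be)) (IH _ _) => //; lia.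
apply: Ht => //; rewrite /alive; apply/andP; split => //; lia.
Qed.

Lemma death k al be : (k < size bars)%N -> (a k <= al)%N -> (al <= b k)%N ->
  (b k < be)%N -> (be < m)%N -> is_boundary n (L be) (z k al).
Proof.
move=> hk h1 h2 h3 h4.
have -> : z k al = (z k al - z k (b k)) + z k (b k) by rewrite subrK.
apply: bndD.
  apply: bnd_mono (Kfilt_mono _ _ (ltnW h3)) _; exact: transport.
apply: bnd_mono (Kfilt_mono _ _ h3) _; apply: Hd => //.
  by rewrite /alive leqnn andbT; lia.
by rewrite /alive negb_and; apply/orP; right; rewrite -ltnNge.
lia.
Qed.

Definition Tset al be := [set k : 'I_(size bars) | (a k <= al)%N && (be <= b k)%N].

Lemma famY al be : (al <= be)%N -> (be < m)%N ->
  (forall k, k \in Tset al be -> is_cycle n (L al) (z k al)) /\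
  (forall S : {set 'I_(size bars)}, S \subset Tset al be -> is_boundary n (L be) (\sum_(k in S) z k al) ->
     S = set0).
Proof.
move=> h1 h2; split.
  move=> k; rewrite inE => /andP [k1 k2]; apply: Hc => //.
  by rewrite /alive k1 /=; lia.
move=> S /subsetP sS hb; apply: (Hi h2).
  move=> k /sS; rewrite inE /alive => /andP [k1 k2]; rewrite k2 andbT; lia.
have -> : \sum_(k in S) z k be =
   \sum_(k in S) z k al - \sum_(k in S) (z k al - z k be).
  by rewrite sumrB opprB addrC subrK.
apply: bndB => //; apply: bnd_sum => k /sS; rewrite inE => /andP [k1 k2].
exact: transport.
Qed.

Lemma famX al be (I : finType) (A : {set I}) (c : I -> chain V) :
  (al <= be)%N -> (be < m)%N ->
  (forall i, i \in A -> is_cycle n (L al) (c i)) ->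
  (forall S : {set I}, S \subset A -> is_boundary n (L be) (\sum_(i in S) c i) -> S = set0) ->
  (#|A| <= #|Tset al be|)%N.
Proof.
move=> h1 h2 hc hind.
have al_m : (al < m)%N by lia.
have H : forall S : {set I}, exists U : {set 'I_(size bars)},
    U \subset Tset al be /\
    is_boundary n (L be) (\sum_(i in S :&: A) c i - \sum_(k in U) z k be).
  move=> S.
  have cy : is_cycle n (L al) (\sum_(i in S :&: A) c i).
    by apply: cyc_sum => i; rewrite inE => /andP [_ /hc].
  have [S' [S'a S'b]] := Hs al_m cy.
  exists (S' :&: Tset al be); split; first exact: subsetIr.
  rewrite (zmod_id _ (\sum_(k in S' :&: Tset al be) z k al)
                     (\sum_(k in S' :\: Tset al be) z k al)).
  rewrite -big_setID.
  apply: bndD; first apply: bndD.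
  - exact: bnd_mono (Kfilt_mono _ _ h1) S'b.
  - apply: bnd_sum => k; rewrite !inE negb_and => /andP [/orP hk kS'].
    have := S'a _ kS'; rewrite /alive => /andP [k1 k2].
    case: hk => hk; first by rewrite k1 in hk.
    apply: death => //; lia.
  - rewrite -sumrB; apply: bnd_sum => k; rewrite !inE => /andP [_ /andP [k1 k2]].
    exact: transport.
pose g S := proj1_sig (constructive_indefinite_description _ (H S)).
have gP S : g S \subset Tset al be /\
    is_boundary n (L be) (\sum_(i in S :&: A) c i - \sum_(k in g S) z k be).
  exact: (proj2_sig (constructive_indefinite_description _ (H S))).
have ginj : {in powerset A &, injective g}.
  move=> S1 S2; rewrite !inE => s1 s2 e.
  have [_ b1] := gP S1; have [_ b2] := gP S2.
  have := bndB b1 b2; rewrite e opprB addrA subrK.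
  rewrite (setIidPl s1) (setIidPl s2) sum_symdiff => /hind E.
  have {}E : (S1 :\: S2 :|: S2 :\: S1) = set0.
    apply: E; apply/subsetP => x; rewrite !inE => /orP [] /andP [_ h].
    - exact: (subsetP s1).
    - exact: (subsetP s2).
  apply/setP => x; move/setP: E => /(_ x); rewrite !inE.
  by case: (x \in S1); case: (x \in S2).
have : (#|powerset A| <= #|powerset (Tset al be)|)%N.
  rewrite -(card_in_imset ginj); apply: subset_leq_card.
  apply/subsetP => U /imsetP [S _ ->]; rewrite inE; exact: (gP S).1.
by rewrite !card_powerset leq_exp2l.
Qed.

End Decomp.

Section Thresh.
Variables (R : realType) (d : Order.disp_t) (P : finPOrderType d) (fP : P -> R).
Local Notation m := #|P|.

Definition dclosed (pr : R -> bool) := forall x y : R, (y <= x)%R -> pr x -> pr y.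
Definition cnt (pr : R -> bool) := #|[set p : P | pr (fP p)]|.

Lemma cnt_le pr : (cnt pr <= m)%N.
Proof. exact: max_card. Qed.

Lemma cnt_mono (pr1 pr2 : R -> bool) : (forall y, pr1 y -> pr2 y) -> (cnt pr1 <= cnt pr2)%N.
Proof.
move=> h; apply: subset_leq_card; apply/subsetP => p; rewrite !inE; exact: h.
Qed.

Variable ord : 'I_#|P| -> P.
Hypothesis fc : f_compatible fP ord.

Lemma F1 pr : dclosed pr -> forall j : 'I_#|P|, (j < cnt pr)%N = pr (fP (ord j)).
Proof.
move=> hpr j; have [[g og go] [_ mono]] := fc.
set S := [set j : 'I_#|P| | pr (fP (ord j))].
have cS : #|S| = cnt pr.
  rewrite /cnt -(card_imset _ (can_inj og)); congr #|pred_of_set _|; apply/setP => p.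
  rewrite inE; apply/imsetP/idP => [[i]|h]; first by rewrite inE => h ->.
  by exists (g p); rewrite ?inE go.
have dc : forall i j : 'I_#|P|, (i <= j)%N -> j \in S -> i \in S.
  move=> i k; rewrite !inE => ik; apply: hpr; exact: mono.
rewrite -cS; case: (boolP (pr (fP (ord j)))) => hj.
  have : [set i : 'I_#|P| | (i < j.+1)%N] \subset S.
    by apply/subsetP => i; rewrite inE ltnS => ij; apply: dc ij _; rewrite inE.
  by move/subset_leq_card; rewrite card_lt.
apply/negbTE; rewrite -leqNgt.
have : S \subset [set i : 'I_#|P| | (i < j)%N].
  apply/subsetP => i hi; rewrite inE ltnNge; apply/negP => ji.
  by move: (dc j i ji hi); rewrite inE (negbTE hj).
by move/subset_leq_card; rewrite card_lt // ltnW.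
Qed.

Lemma F3 (V : finType) (M : P -> {set {set V}}) pr : dclosed pr -> (0 < cnt pr)%N ->
  Kfilt M ord (cnt pr).-1 = \bigcup_(p | pr (fP p)) M p.
Proof.
move=> hpr c0; have [[g og go] _] := fc.
apply/setP => s; apply/bigcupP/bigcupP => [[j hj hs]|[p hp hs]].
  by exists (ord j) => //; rewrite -F1 //; lia.
exists (g p); last by rewrite go.
have := F1 hpr (g p); rewrite go hp; lia.
Qed.

Lemma fvalS i (h : (i < m)%N) : fval fP ord i = Some (fP (ord (Ordinal h))).
Proof. by rewrite /fval insubT /=; do 3 f_equal; apply: val_inj. Qed.

Lemma fvalN i : (m <= i)%N -> fval fP ord i = None.
Proof. by move=> h; rewrite /fval insubF // ltnNge h. Qed.

Lemma dc_le x : dclosed (fun y => y <= x)%R.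
Proof. by move=> a b ba ax; apply: le_trans ba ax. Qed.
Lemma dc_lt x : dclosed (fun y => y < x)%R.
Proof. by move=> a b ba ax; apply: le_lt_trans ba ax. Qed.
Lemma dc_T : dclosed (fun _ => true).
Proof. by []. Qed.

Lemma cntT : cnt (fun _ => true) = m.
Proof. by rewrite /cnt cardsT. Qed.

Lemma vS1 i x : (i < m)%N -> (fval fP ord i == Some x) =
  (cnt (fun y => y < x)%R <= i < cnt (fun y => y <= x)%R)%N.
Proof.
move=> h; rewrite fvalS /=.
have := F1 (@dc_le x) (Ordinal h); have := F1 (@dc_lt x) (Ordinal h); rewrite /= => e1 e2.
rewrite leqNgt e1 e2 (inj_eq (@Some_inj _)); by case: ltgtP.
Qed.

Lemma vN1 i : (i < m)%N -> (fval fP ord i == None) = false.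
Proof. by move=> h; rewrite fvalS. Qed.

Lemma vS2 b y : (b < m)%N -> (fval fP ord b.+1 == Some y) =
  ((cnt (fun z => z < y)%R).-1 <= b < (cnt (fun z => z <= y)%R).-1)%N.
Proof.
move=> h; case: (ltnP b.+1 m) => h2.
  rewrite vS1 //; apply/idP/idP => /andP [u v]; apply/andP; split; lia.
rewrite fvalN //=; apply/esym/negbTE; have := cnt_le (fun z => z <= y)%R; lia.
Qed.

Lemma vN2 b : (b < m)%N -> (fval fP ord b.+1 == None) = (m.-1 <= b < m)%N.
Proof.
move=> h; case: (ltnP b.+1 m) => h2; first by rewrite fvalS; apply/esym/negbTE; lia.
by rewrite fvalN //; apply/esym; apply/andP; split; lia.
Qed.

Lemma cm_pers (s : seq (nat * nat)) (pt : option R * option R) :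
  count_mem pt (pers fP ord s) = ((pt.1 != pt.2) *
    count (fun ab : nat * nat => (fval fP ord ab.1 == pt.1) &&
                                 (fval fP ord ab.2.+1 == pt.2)) s)%N.
Proof.
rewrite /pers count_filter count_map; case: pt => [p1 p2] /=.
case: (eqVneq p1 p2) => [<-|hp] /=.
  rewrite mul0n (eq_count (a2 := pred0)) ?count_pred0 // => ab /=.
  by case: eqP => //= [[-> ->]]; rewrite eqxx.
rewrite mul1n; apply: eq_count => ab /=.
rewrite xpair_eqE; case: eqP => //= ->; case: eqP => //= ->; exact: hp.
Qed.

End Thresh.

Lemma rng (V : finType) (K : {set {set V}}) d (P : finPOrderType d) (M : P -> {set {set V}}) ord n bars
  (z : nat -> nat -> chain V) :
  interval_decomposition K M ord n bars z ->
  forall ab, ab \in bars -> (ab.1 <= ab.2 < #|P|)%N.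
Proof. by move=> D ab /(nthP (0, 0)) [k hk <-]; apply: D.1. Qed.

Lemma Qbig (s : seq (nat * nat)) m al be : (forall ab, ab \in s -> (ab.1 <= ab.2 < m)%N) ->
  (m <= be)%N -> Q s al be = 0%N.
Proof.
move=> h hb; rewrite /Q (eq_in_count (a2 := pred0)) ?count_pred0 // => ab /h /andP [_ h2] /=.
by apply/negP => /andP [_ h3]; have := leq_trans h2 hb; rewrite ltnNge h3.
Qed.

Lemma QE (V : finType) (K : {set {set V}}) d (P : finPOrderType d) (M : P -> {set {set V}}) ord ord' n
  bars bars' (z z' : nat -> nat -> chain V) :
  interval_decomposition K M ord n bars z ->
  interval_decomposition K M ord' n bars' z' ->
  forall al' be, (al' <= be.+1)%N ->
  ((0 < al')%N -> Kfilt M ord al'.-1 = Kfilt M ord' al'.-1) ->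
  ((0 < al')%N -> (be < #|P|)%N -> Kfilt M ord be = Kfilt M ord' be) ->
  Q bars al' be = Q bars' al' be.
Proof.
move=> D D' [|al] be h1 hL1 hL2.
  by rewrite /Q !(eq_count (a2 := pred0)) ?count_pred0.
case: (ltnP be #|P|) => hbe; last by rewrite (Qbig _ (rng D) hbe) (Qbig _ (rng D') hbe).
have {}hL1 := hL1 isT; have {}hL2 := hL2 isT hbe; rewrite /= in hL1.
have ab : (al <= be)%N by lia.
rewrite /Q !(count_card (0, 0)).
have E : forall (bs : seq (nat * nat)), [set k : 'I_(size bs) |
    ((nth (0, 0) bs k).1 < al.+1)%N && (be <= (nth (0, 0) bs k).2)%N] = Tset bs al be.
  by move=> bs; apply/setP => k; rewrite !inE ltnS.
rewrite !E.
apply/eqP; rewrite eqn_leq; apply/andP; split.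
  have [Y1 Y2] := famY D ab hbe.
  apply: (famX D' (A := Tset bars al be) (c := fun k => z k al)) => //.
    by move=> k /Y1; rewrite hL1.
  by move=> S sS; rewrite -hL2; apply: Y2.
have [Y1 Y2] := famY D' ab hbe.
apply: (famX D (A := Tset bars' al be) (c := fun k => z' k al)) => //.
  by move=> k /Y1; rewrite hL1.
by move=> S sS; rewrite hL2; apply: Y2.
Qed.

Lemma cz (T : eqType) (s : seq T) (p : pred T) :
  (forall x, x \in s -> p x = false) -> count p s = 0%N.
Proof.
by move=> h; rewrite (eq_in_count (a2 := pred0)) ?count_pred0 // => x /h ->.
Qed.

Theorem proposition13 (R : realType) (V : finType) (K : {set {set V}})
  (MV : {set {set {set V}}}) (d : Order.disp_t) (P : finPOrderType d)
  (M : P -> {set {set V}}) (f : {set V} -> R) (fP : P -> R)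
  (ord ord' : 'I_#|P| -> P) :
  simplicial_complex K ->
  multivector_field K MV ->
  morse_decomposition K MV M ->
  lyapunov M f fP ->
  f_compatible fP ord ->
  f_compatible fP ord' ->
  forall (n : nat) (bars bars' : seq (nat * nat)) (z z' : nat -> nat -> chain V),
    interval_decomposition K M ord n bars z ->
    interval_decomposition K M ord' n bars' z' ->
    perm_eq (pers fP ord bars) (pers fP ord' bars').
Proof.
move=> _ _ _ _ fc fc' n bars bars' z z' D D'.
have Ev : forall i, fval fP ord' i = fval fP ord i.
  have F2 : forall j, fP (ord' j) = fP (ord j).
    move=> j; apply/le_anti/andP; split.
      by rewrite -(F1 fc' (@dc_le R (fP (ord j)))) (F1 fc (@dc_le R (fP (ord j)))).
    by rewrite -(F1 fc (@dc_le R (fP (ord' j)))) (F1 fc' (@dc_le R (fP (ord' j)))).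
  by move=> i; rewrite /fval; case: insub => // j; rewrite F2.
have -> : pers fP ord' bars' = pers fP ord bars'.
  by rewrite /pers; congr filter; apply: eq_map => ab; rewrite !Ev.
have QH : forall pr1 pr2, dclosed pr1 -> dclosed pr2 -> (forall y, pr1 y -> pr2 y) ->
    Q bars (cnt fP pr1) (cnt fP pr2).-1 = Q bars' (cnt fP pr1) (cnt fP pr2).-1.
  move=> pr1 pr2 d1 d2 h12; have c12 := cnt_mono fP h12.
  have c2 := cnt_le fP pr2.
  apply: (QE D D').
  - lia.
  - by move=> c1; rewrite (F3 fc M d1 c1) (F3 fc' M d1 c1).
  - move=> c1 _; have c2' : (0 < cnt fP pr2)%N by lia.
    by rewrite (F3 fc M d2 c2') (F3 fc' M d2 c2').
have r := rng D; have r' := rng D'.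
rewrite /perm_eq; apply/allP => pt _; apply/eqP; rewrite !cm_pers.
case: pt => [[x|] [y|]] /=.
- case: (eqVneq x y) => [<-|hxy]; first by rewrite eqxx !mul0n.
  rewrite (inj_eq (@Some_inj _)) hxy !mul1n.
  case: (ltgtP x y) => hlt; last by rewrite hlt eqxx in hxy.
  + have conv : forall s : seq (nat * nat), (forall ab, ab \in s -> (ab.1 <= ab.2 < #|P|)%N) ->
      count (fun ab : nat * nat => (fval fP ord ab.1 == Some x) && (fval fP ord ab.2.+1 == Some y)) s =
      count (fun ab : nat * nat => [&& cnt fP (fun z => z < x)%R <= ab.1 < cnt fP (fun z => z <= x)%R,
          (cnt fP (fun z => z < y)%R).-1 <= ab.2 & ab.2 < (cnt fP (fun z => z <= y)%R).-1]%N) s.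
      move=> s hs; apply: eq_in_count => ab /hs /andP [h1 h2].
      by rewrite (vS1 fc x (leq_ltn_trans h1 h2)) (vS2 fc y h2).
    rewrite !conv //.
    have k1 := cnt_mono fP (fun z (hz : (z < x)%R) => ltW hz).
    have k2 := cnt_mono fP (fun z (hz : (z < y)%R) => ltW hz).
    have k3 : ((cnt fP (fun z => z < y)%R).-1 <= (cnt fP (fun z => z <= y)%R).-1)%N by lia.
    have Rg := fun s => region s k1 k3.
    have E1 := QH _ _ (@dc_lt R x) (@dc_lt R y) (fun z hz => lt_trans hz hlt).
    have E2 := QH _ _ (@dc_le R x) (@dc_le R y) (fun z hz => le_trans hz (ltW hlt)).
    have E3 := QH _ _ (@dc_le R x) (@dc_lt R y) (fun z hz => le_lt_trans hz hlt).
    have E4 := QH _ _ (@dc_lt R x) (@dc_le R y) (fun z hz => ltW (lt_trans hz hlt)).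
    move: (Rg bars) (Rg bars'); rewrite E1 E2 E3 E4; lia.
  + have k := cnt_mono fP (fun z (hz : (z <= y)%R) => le_lt_trans hz hlt).
    rewrite !cz //; move=> ab hab;
      first [have /andP [h1 h2] := r _ hab | have /andP [h1 h2] := r' _ hab];
      rewrite (vS1 fc x (leq_ltn_trans h1 h2)) (vS2 fc y h2);
      apply/negP => /andP [/andP [u1 u2] /andP [u3 u4]]; lia.
- rewrite !mul1n.
  have conv : forall s : seq (nat * nat), (forall ab, ab \in s -> (ab.1 <= ab.2 < #|P|)%N) ->
      count (fun ab : nat * nat => (fval fP ord ab.1 == Some x) && (fval fP ord ab.2.+1 == None)) s =
      count (fun ab : nat * nat => [&& cnt fP (fun z => z < x)%R <= ab.1 < cnt fP (fun z => z <= x)%R,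
          #|P|.-1 <= ab.2 & ab.2 < #|P|]%N) s.
    move=> s hs; apply: eq_in_count => ab /hs /andP [h1 h2].
    by rewrite (vS1 fc x (leq_ltn_trans h1 h2)) (vN2 fP ord h2).
  rewrite !conv //.
  have k1 := cnt_mono fP (fun z (hz : (z < x)%R) => ltW hz).
  have k3 : (#|P|.-1 <= #|P|)%N by lia.
  have Rg := fun s => region s k1 k3.
  have E1 := QH _ _ (@dc_lt R x) (@dc_T R) (fun z hz => isT).
  have E2 := QH _ _ (@dc_le R x) (@dc_T R) (fun z hz => isT).
  rewrite cntT in E1 E2.
  move: (Rg bars) (Rg bars'); rewrite E1 E2.
  rewrite (Qbig _ r (leqnn _)) (Qbig _ r' (leqnn _)) (Qbig _ r (leqnn _)) (Qbig _ r' (leqnn _)).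
  lia.
- rewrite !cz //; move=> [a b] hab;
    first [have /andP [h1 h2] := r _ hab | have /andP [h1 h2] := r' _ hab];
    by rewrite /= vN1 //; exact: leq_ltn_trans h1 h2.
- by rewrite mul0n.
Qed.
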